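(* Let $w(z_1,\dots,z_m)$ be a quasi-linear group word, let $n\ge2$ be a natural number, and let $\mathsf F^w_n$ be the free group of rank $n$ of the variety $V_w$, with free basis $x_1,\dots,x_n$ and word norm $\|\cdot\|$ associated with $\overline S$, $S=\{x_1^{\pm1},\dots,x_n^{\pm1}\}$. Let $\mathcal C$ be a class of groups with invariant integer-valued norms which is closed under taking subgroups (with the restricted norm). Then $(\mathsf F^w_n,\|\cdot\|)$ is metrically LE$\mathcal C$ if and only if it is metrically fully residually $\mathcal C$.
   Context: $\Lambda=[0,\infty)$. $V_w$ is the variety of groups satisfying the identity $w=1$. The word $w$ is quasi-linear if for every group $H$ and every generating set $A$ of $H$: $H\in V_w$ iff $w(\bar a)=1$ for every $m$-tuple $\bar a$ of elements of $A$. A pseudo-norm on $G$ is $\ell:G\to\Lambda$ with $\ell(1)=0$, $\ell(g)=\ell(g^{-1})$, $\ell(gh)\le\ell(g)+\ell(h)$; a norm if $\ell(g)=0\Rightarrow g=1$; invariant if $\ell(h^{-1}gh)=\ell(g)$. For symmetric $S\subseteq G$, $\overline S$ is the smallest conjugation-invariant subset containing $S$; the word norm is $\|g\|=\min\{k:g=s_1\cdots s_k,s_i\in\overline S\}$. For pseudo-normed $(G_1,\ell_1),(G_2,\ell_2)$, finite $D\subseteq G_1$ and finite $Q\subseteq\Lambda\cap\mathbb Q$ with $0\in Q$, $\varphi:G_1\to G_2$ is a $D$-$Q$-almost-homomorphism if injective on $D$, $\varphi(hg)=\varphi(h)\varphi(g)$ whenever $h,g,hg\in D$, and $\ell_1(g)\,\square\,q\iff\ell_2(\varphi(g))\,\square\,q$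 for all $g\in D,q\in Q,\square\in\{<,>,=\}$. $(G,\ell)$ is metrically LE$\mathcal C$ if for all such $D,Q$ there are $(C,\ell_C)\in\mathcal C$ and a $D$-$Q$-almost-homomorphism $G\to C$; it is metrically fully residually $\mathcal C$ if for all such $D,Q$ there are $(C,\ell_C)\in\mathcal C$ and a group homomorphism $\varphi:G\to C$ with $\ell_C(\varphi(g))\le\ell(g)$ for all $g\in G$ which is a $D$-$Q$-almost-homomorphism. *)

(* Defs.v *)
From HB Require Import structures.
From mathcomp Require Import all_boot monoid all_order all_algebra.
Set Implicit Arguments. Unset Strict Implicit. Unset Printing Implicit Defensive.
Import Order.TTheory GRing.Theory Num.Theory.

Local Open Scope group_scope.

Inductive gword (m : nat) : Type :=
  | GVar of 'I_m
  | GOne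
  | GMul of gword m & gword m
  | GInv of gword m.

Fixpoint geval (m : nat) (H : groupType) (a : 'I_m -> H) (t : gword m) : H :=
  match t with
  | GVar i => a i
  | GOne => 1
  | GMul t1 t2 => geval a t1 * geval a t2
  | GInv t1 => (geval a t1)^-1
  end.

Definition in_variety (m : nat) (w : gword m) (H : groupType) : Prop :=
  forall a : 'I_m -> H, geval a w = 1.

Definition generates (H : groupType) (A : H -> Prop) : Prop :=
  forall h : H, exists (k : nat) (t : gword k) (a : 'I_k -> H),
    (forall i, A (a i)) /\ h = geval a t.

Definition quasi_linear (m : nat) (w : gword m) : Prop :=
  forall (H : groupType) (A : H -> Prop), generates A ->
    (in_variety w H <->
     forall a : 'I_m -> H, (forall i, A (a i)) -> geval a w = 1).

Definition is_hom (G H : groupType) (f : G -> H) : Prop :=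
  forall g h : G, f (g * h) = f g * f h.

Definition is_free_Vw (m : nat) (w : gword m) (n : nat) (F : groupType)
    (x : 'I_n -> F) : Prop :=
  [/\ in_variety w F,
      generates (fun g => exists i, g = x i) &
      forall (H : groupType) (h : 'I_n -> H), in_variety w H ->
        exists f : F -> H, is_hom f /\ forall i, f (x i) = h i].

Definition in_S (n : nat) (F : groupType) (x : 'I_n -> F) (g : F) : Prop :=
  exists i, g = x i \/ g = (x i)^-1.

Definition in_Sbar (n : nat) (F : groupType) (x : 'I_n -> F) (g : F) : Prop :=
  forall T : F -> Prop,
    (forall s, in_S x s -> T s) ->
    (forall t y : F, T t -> T (conjg t y)) -> T g.

Definition gprod (G : groupType) (s : seq G) : G := foldr (fun a b => a * b) 1 s.

Definition is_word_norm (n : nat) (F : groupType) (x : 'I_n -> F)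
    (nrm : F -> nat) : Prop :=
  forall g : F,
    (exists s : seq F, size s = nrm g /\ (forall y, y \in s -> in_Sbar x y)
                       /\ g = gprod s) /\
    (forall s : seq F, (forall y, y \in s -> in_Sbar x y) -> g = gprod s ->
       (nrm g <= size s)%N).

Definition invariant_norm (G : groupType) (l : G -> nat) : Prop :=
  [/\ l 1 = 0%N,
      forall g : G, l g^-1 = l g,
      forall g h : G, (l (g * h)%g <= l g + l h)%N,
      forall g : G, l g = 0%N -> g = 1 &
      forall g h : G, l (conjg g h) = l g].

Local Open Scope ring_scope.

(* D-Q-almost-homomorphism, for integer-valued norms; Q is a finite set of
   nonnegative rationals containing 0 (given as a sequence). *)
Definition almost_hom (G1 G2 : groupType) (l1 : G1 -> nat) (l2 : G2 -> nat)
    (D : seq G1) (Q : seq rat) (phi : G1 -> G2) : Prop :=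
  [/\ {in D &, injective phi},
      (forall g h : G1, g \in D -> h \in D -> (h * g)%g \in D ->
          phi (h * g)%g = (phi h * phi g)%g) &
      forall (g : G1) (q : rat), g \in D -> q \in Q ->
        [/\ ((l1 g)%:R < q) <-> ((l2 (phi g))%:R < q),
            ((l1 g)%:R > q) <-> ((l2 (phi g))%:R > q) &
            ((l1 g)%:R = q :> rat) <-> ((l2 (phi g))%:R = q :> rat)]].

Definition admissible_Q (Q : seq rat) : Prop :=
  0 \in Q /\ forall q, q \in Q -> 0 <= q.

Definition metrically_LE (C : forall G : groupType, (G -> nat) -> Prop)
    (G : groupType) (l : G -> nat) : Prop :=
  forall (D : seq G) (Q : seq rat), admissible_Q Q ->
    exists (K : groupType) (lK : K -> nat),
      C K lK /\ exists phi : G -> K, almost_hom l lK D Q phi.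

Definition metrically_fully_residually (C : forall G : groupType, (G -> nat) -> Prop)
    (G : groupType) (l : G -> nat) : Prop :=
  forall (D : seq G) (Q : seq rat), admissible_Q Q ->
    exists (K : groupType) (lK : K -> nat),
      C K lK /\ exists phi : G -> K,
        [/\ is_hom phi, (forall g, (lK (phi g) <= l g)%N) & almost_hom l lK D Q phi].

(* Main.v *)
Require Import Defs.
From HB Require Import structures.
From mathcomp Require Import all_boot monoid all_order all_algebra.
From Stdlib Require Import ClassicalEpsilon.
Set Implicit Arguments. Unset Strict Implicit. Unset Printing Implicit Defensive.
Import Order.TTheory GRing.Theory Num.Theory.

Section SubG.
Local Open Scope group_scope.
Variables (G : groupType) (P : G -> Prop).
Hypotheses (P1 : P 1) (PM : forall x y, P x -> P y -> P (x * y)) (PV : forall x, P x -> P x^-1).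
Definition Pb : pred G := fun g => if excluded_middle_informative (P g) then true else false.
Lemma PbP g : Pb g <-> P g.
Proof. rewrite /Pb; case: excluded_middle_informative => //; split => //. Qed.
Record subT := SubT { sval : G; sP : Pb sval }.
HB.instance Definition _ := [isSub for sval].
HB.instance Definition _ := [Choice of subT by <:].
Lemma Pb_closed : group_closed Pb.
Proof. split; first by apply/PbP. move=> u v /PbP ? /PbP ?; apply/PbP; auto. Qed.
HB.instance Definition _ := SubChoice_isSubGroup.Build G Pb subT Pb_closed.
Definition subTg : subGroupType Pb := subT.
Lemma valMs (a b : subTg) : val (a * b) = val a * val b.
Proof. by []. Qed.
Lemma val1s : val (1 : subTg) = 1.
Proof. by []. Qed.
Lemma valVs (a : subTg) : val (a^-1) = (val a)^-1.
Proof. by []. Qed.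
End SubG.

Local Open Scope group_scope.

Fixpoint gmap k n (f : 'I_k -> 'I_n) (t : gword k) : gword n :=
  match t with
  | GVar i => GVar (f i)
  | GOne => GOne n
  | GMul t1 t2 => GMul (gmap f t1) (gmap f t2)
  | GInv t1 => GInv (gmap f t1)
  end.

Lemma geval_gmap (G : groupType) k n (f : 'I_k -> 'I_n) (b : 'I_n -> G) t :
  geval b (gmap f t) = geval (fun i => b (f i)) t.
Proof. by elim: t => //= [t1 -> t2 ->|t1 ->]. Qed.

Lemma geval_ext (G : groupType) k (a b : 'I_k -> G) t :
  (forall i, a i = b i) -> geval a t = geval b t.
Proof. by move=> ab; elim: t => //= [t1 -> t2 ->|t1 ->]. Qed.

Fixpoint subl (G : groupType) k (a : 'I_k -> G) (t : gword k) : seq G :=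
  match t with
  | GVar i => [:: a i]
  | GOne => [:: 1]
  | GMul t1 t2 => geval a t1 * geval a t2 :: subl a t1 ++ subl a t2
  | GInv t1 => (geval a t1)^-1 :: subl a t1
  end.

Lemma geval_subl (G : groupType) k (a : 'I_k -> G) t : geval a t \in subl a t.
Proof. by case: t => /= *; rewrite inE eqxx. Qed.

Lemma phi_geval (G K : groupType) (phi : G -> K) (L : seq G) :
  1 \in L ->
  (forall g h, g \in L -> h \in L -> h * g \in L -> phi (h * g) = phi h * phi g) ->
  forall k (a : 'I_k -> G) t, {subset subl a t <= L} ->
  phi (geval a t) = geval (fun i => phi (a i)) t.
Proof.
move=> L1 Lm.
have phi1 : phi 1 = 1.
  by apply: (mulIg (phi 1)); rewrite mul1g -Lm ?mulg1.
move=> k a; elim => //=.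
- move=> t1 IH1 t2 IH2 sub.
  have s1 : {subset subl a t1 <= L} by move=> y yi; apply: sub; rewrite inE mem_cat yi orbT.
  have s2 : {subset subl a t2 <= L} by move=> y yi; apply: sub; rewrite inE mem_cat yi !orbT.
  rewrite Lm ?IH1 ?IH2 //; try exact: s1 (geval_subl _ _); try exact: s2 (geval_subl _ _).
  by apply: sub; rewrite inE eqxx.
- move=> t1 IH1 sub.
  have s1 : {subset subl a t1 <= L} by move=> y yi; apply: sub; rewrite inE yi orbT.
  have v1 := s1 _ (geval_subl a t1).
  have vV : (geval a t1)^-1 \in L by apply: sub; rewrite inE eqxx.
  rewrite -IH1 //; apply/esym/mulg1_eq.
  by rewrite -Lm ?mulgV // mulgV.
Qed.

Section Hom.
Variables (G K : groupType) (f : G -> K).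
Hypothesis hf : is_hom f.
Lemma hom1 : f 1 = 1.
Proof. by apply: (mulIg (f 1)); rewrite mul1g -hf mulg1. Qed.
Lemma homV g : f g^-1 = (f g)^-1.
Proof. by apply/esym/mulg1_eq; rewrite -hf mulgV hom1. Qed.
Lemma hom_geval k (a : 'I_k -> G) t : f (geval a t) = geval (fun i => f (a i)) t.
Proof. by elim: t => //= [|t1 IH1 t2 IH2|t1 IH1]; rewrite ?hom1 ?hf ?homV ?IH1 ?IH2. Qed.
Lemma hom_gprod s : f (gprod s) = gprod (map f s).
Proof. by elim: s => [|y s IH] /=; rewrite /gprod /= ?hom1 // hf; congr (_ * _). Qed.
Lemma hom_conj a b : f (conjg a b) = conjg (f a) (f b).
Proof. by rewrite /conjg !hf homV. Qed.
End Hom.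
Local Close Scope group_scope.
Lemma exD (F : groupType) n (x : 'I_n -> F) :
  generates (fun g => exists i, g = x i) ->
  forall D : seq F, exists L : seq F, forall g, g \in D ->
    exists t : gword n, g = geval x t /\ {subset subl x t <= L}.
Proof.
move=> gen; elim => [|g D [L HL]]; first by exists [::].
have [k [t [a [Ha ->]]]] := gen g.
have [j Hj] : exists j : 'I_k -> 'I_n, forall i, a i = x (j i).
  exists (fun i => proj1_sig (constructive_indefinite_description _ (Ha i))).
  by move=> i; case: constructive_indefinite_description.
exists (subl x (gmap j t) ++ L) => h; rewrite inE => /orP [/eqP ->|hD].
  exists (gmap j t); split; last by move=> y yi; rewrite mem_cat yi.
  by rewrite geval_gmap; apply: geval_ext.
have [t' [-> s']] := HL h hD; exists t'; split => // y /s' yi.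
by rewrite mem_cat yi orbT.
Qed.

Lemma nat_rat_le1 (a b : nat) :
  (forall q : rat, q = 1%R -> ((a%:R > q)%R <-> (b%:R > q)%R)) ->
  (b <= 1)%N -> (a <= 1)%N.
Proof.
move=> H b1; rewrite leqNgt; apply/negP => a1.
have : (1 < (b%:R : rat))%R by apply/(H 1%R erefl); rewrite ltr1n.
by rewrite ltr1n ltnNge b1.
Qed.

Theorem proposition3p3 (m : nat) (w : gword m) (n : nat) (F : groupType)
    (x : 'I_n -> F) (nrm : F -> nat)
    (C : forall G : groupType, (G -> nat) -> Prop) :
  quasi_linear w ->
  (2 <= n)%N ->
  is_free_Vw w x ->
  is_word_norm x nrm ->
  (forall (G : groupType) (l : G -> nat), C G l -> invariant_norm l) ->
  (forall (G : groupType) (l : G -> nat) (S : pred G) (H : subGroupType S),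
      C G l -> C H (fun h : H => l (val h))) ->
  (metrically_LE C nrm <-> metrically_fully_residually C nrm).
Proof.
move=> qlin _ [Fw Fgen Funiv] Hnrm Cnorm Csub; split; last first.
  move=> MF D Q adQ; have [K [lK [CK [phi [_ _ ah]]]]] := MF D Q adQ.
  by exists K, lK; split => //; exists phi.
move=> LE D Q [Q0 Qpos].
have [LD HLD] := exD Fgen D.
pose Lw := flatten [seq subl x (gmap (fun i => (f : {ffun 'I_m -> 'I_n}) i) w) | f <- enum {ffun 'I_m -> 'I_n}].
pose D' := D ++ LD ++ Lw ++ (1%g :: [seq x i | i <- enum 'I_n]).
pose Q' := (1%R : rat) :: Q.
have adQ' : admissible_Q Q'.
  split; first by rewrite inE Q0 orbT.
  by move=> q; rewrite inE => /orP [/eqP ->|/Qpos].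
have [K [lK [CK [phi [phinj phim phin]]]]] := LE D' Q' adQ'.
have [lK1 lKV lKM lK0 lKJ] := Cnorm K lK CK.
have D'1 : 1%g \in D' by rewrite !mem_cat inE eqxx !orbT.
have DD' : {subset D <= D'} by move=> y yi; rewrite mem_cat yi.
have LDD' : {subset LD <= D'} by move=> y yi; rewrite !mem_cat yi orbT.
have LwD' : {subset Lw <= D'} by move=> y yi; rewrite !mem_cat yi !orbT.
have xD' i : x i \in D'.
  by rewrite !mem_cat inE (map_f x) ?mem_enum ?orbT.
pose P := fun k : K => exists t : gword n, k = geval (fun i => phi (x i)) t.
have P1 : P 1%g by exists (GOne n).
have PM : forall a b, P a -> P b -> P (a * b)%g.
  by move=> a b [ta ->] [tb ->]; exists (GMul ta tb).
have PV : forall a, P a -> P a^-1%g.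
  by move=> a [ta ->]; exists (GInv ta).
pose H := subTg P1 PM PV.
pose lH := fun h : H => lK (val h).
have CH : C H lH by apply: Csub.
have xP i : Pb P (phi (x i)) by apply/PbP; exists (GVar i).
pose a' := fun i => (SubT (xP i) : H).
have val_geval k (b : 'I_k -> H) t : val (geval b t) = geval (fun i => val (b i)) t.
  by elim: t => //= [t1 <- t2 <-|t1 <-].
have phi_geval' t : {subset subl x t <= D'} ->
    phi (geval x t) = geval (fun i => phi (x i)) t.
  by apply: phi_geval => // g h gD hD hgD; apply: phim.
have gen : generates (fun h : H => exists i, val h = phi (x i)).
  move=> h; have [t Ht] := (PbP P (val h)).1 (valP h).
  exists n, t, a'; split; first by move=> i; exists i.
  by apply: val_inj; rewrite Ht val_geval.
have HV : in_variety w H.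
  apply/(qlin H _ gen) => b Hb.
  have [j Hj] : exists j : 'I_m -> 'I_n, forall i, val (b i) = phi (x (j i)).
    exists (fun i => proj1_sig (constructive_indefinite_description _ (Hb i))).
    by move=> i; case: constructive_indefinite_description.
  pose f := [ffun i => j i].
  apply: val_inj; rewrite val_geval val1s.
  have sub : {subset subl x (gmap f w) <= D'}.
    move=> y yi; apply: LwD'; apply/flatten_mapP; exists f => //.
    by rewrite mem_enum.
  transitivity (geval (fun i => phi (x i)) (gmap f w)).
    by rewrite geval_gmap; apply: geval_ext => i; rewrite Hj ffunE.
  rewrite -phi_geval' // geval_gmap.
  rewrite (Fw (fun i => x (f i))).
  by apply: (mulIg (phi 1%g)); rewrite mul1g -phim ?mulg1.
have [psi [psih psix]] := Funiv H a' HV.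
have psiD g : g \in D -> val (psi g) = phi g.
  move=> gD; have [t [-> sub]] := HLD g gD.
  rewrite phi_geval'; last by move=> y /sub; apply: LDD'.
  by rewrite (hom_geval psih) val_geval; apply: geval_ext => i; rewrite psix.
exists H, lH; split => //; exists psi; split => //.
- have onex i : (lK (phi (x i)) <= 1)%N.
    apply: (nat_rat_le1 (b:=nrm (x i))).
      move=> q ->; apply: iff_sym.
      by have [_ ? _] := phin (x i) 1%R (xD' i) (mem_head _ _).
    apply: (proj2 (Hnrm (x i)) [:: x i]); last by rewrite /gprod /= mulg1.
    by move=> y; rewrite inE => /eqP -> T base _; apply: base; exists i; left.
  have valJ (u v : H) : val (conjg u v) = conjg (val u) (val v) by [].
  have vM (u v : H) : val (u * v)%g = (val u * val v)%g by [].
  have v1 : val (1%g : H) = 1%g by [].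
  have sbar : forall y, in_Sbar x y -> (lK (val (psi y)) <= 1)%N.
    move=> y0 Hy; apply: (Hy (fun y => (lK (val (psi y)) <= 1)%N)).
    + move=> s0 [i0 [->|->]]; rewrite ?(homV psih) ?valVs ?lKV psix /=; exact: onex.
    + by move=> t y1 ht; rewrite (hom_conj psih) valJ lKJ.
  move=> g; have [[s [<- [sS ->]]] _] := Hnrm g.
  rewrite /lH (hom_gprod psih).
  elim: s sS => [|y s IH] sS.
    by have -> : val (gprod (map psi [::])) = 1%g by []; rewrite lK1.
  have -> : val (gprod (map psi (y :: s))) = (val (psi y) * val (gprod (map psi s)))%g by [].
  apply: leq_trans (lKM _ _) _; rewrite /= -add1n leq_add //.
    by apply: sbar; apply: sS; rewrite mem_head.
  by apply: IH => z zi; apply: sS; rewrite inE zi orbT.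
- split.
  + move=> g1 g2 g1D g2D e; apply: phinj; try exact: DD'.
    by rewrite -!psiD // e.
  + move=> g h gD hD hgD; apply: val_inj.
    by rewrite valMs !psiD // phim //; apply: DD'.
  + move=> g q gD qQ; rewrite /lH psiD //.
    by apply: phin; rewrite ?inE ?qQ ?orbT //; apply: DD'.
Qed.
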